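(* Let $X$ be a compactum and $Z$ a paracompact space such that every compact subspace of $Z$ has finite Lebesgue covering dimension. Let $g\colon Y\to Z$ be a surjective map with the following property: for every $z\in Z$ and every neighborhood $U(z)$ of $z$ in $Z$ there is a neighborhood $V(z)\subset U(z)$ of $z$ such that $g^{-1}(V(z))\in AE(X)$. Then for every open cover $\omega$ of $Z$ and every map $f\colon X\to Z$ there exists a map $\tilde f\colon X\to Y$ such that $f$ and $g\circ\tilde f$ are $\omega$-close (i.e. for every $x\in X$ there is $W\in\omega$ containing both $f(x)$ and $g(\tilde f(x))$).
   Context: All spaces are Tychonoff and all maps continuous; a compactum is a compact Hausdorff space. For spaces $X,Y$, $Y\in AE(X)$ means every map $h\colon A\to Y$ defined on a closed subspace $A\subset X$ extends to a map $X\to Y$. *)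

(* Defs.v *)
From mathcomp Require Import all_boot all_order all_algebra.
From mathcomp Require Import all_classical all_reals all_analysis.
Set Implicit Arguments. Unset Strict Implicit. Unset Printing Implicit Defensive.
Local Open Scope classical_set_scope.

Definition tychonoff_sp (T : topologicalType) :=
  completely_regular_space T /\ hausdorff_space T.

Definition compactum_sp (T : topologicalType) :=
  compact [set: T] /\ hausdorff_space T.

Definition open_cover (T : topologicalType) (w : set (set T)) :=
  (forall W, w W -> open W) /\ (forall x : T, exists W, w W /\ W x).

Definition refines (T : Type) (v w : set (set T)) :=
  forall V, v V -> exists W, w W /\ V `<=` W.

Definition locally_finite (T : topologicalType) (v : set (set T)) :=
  forall x : T, exists N, nbhs x N /\ finite_set [set W | v W /\ (N `&` W !=set0)].

(* paracompact: every open cover has a locally finite open refinement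
   (Hausdorffness is part of the standing Tychonoff assumption) *)
Definition paracompact (T : topologicalType) :=
  forall w : set (set T), open_cover w ->
    exists v, open_cover v /\ refines v w /\ locally_finite v.

Definition rel_open (T : topologicalType) (K U : set T) :=
  exists O, open O /\ U = O `&` K.

(* Lebesgue covering dimension of the subspace K is <= n:
   every finite open cover of K has a finite open refinement covering K
   of order <= n+1 (no point of K lies in n+2 distinct members). *)
Definition covering_dim_le (T : topologicalType) (K : set T) (n : nat) :=
  forall w : set (set T), finite_set w -> (forall U, w U -> rel_open K U) ->
    K `<=` \bigcup_(U in w) U ->
    exists v : set (set T), [/\ finite_set v, (forall V, v V -> rel_open K V),
      K `<=` \bigcup_(V in v) V, refines v w &
      forall f : 'I_n.+2 -> set T, injective f -> (forall i, v (f i)) ->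
        ~ (exists x, K x /\ forall i, f i x)].

(* S (a subset of Y, with the subspace topology) is in AE(X):
   every map from a closed subset A of X into S extends to a map X -> S. *)
Definition AE (X Y : topologicalType) (S : set Y) :=
  forall (A : set X), closed A ->
  forall h : X -> Y, {within A, continuous h} -> h @` A `<=` S ->
  exists F : X -> Y, [/\ continuous F, (forall x, S (F x)) &
                         (forall x, A x -> F x = h x)].

(* Main.v *)
From HB Require Import structures.
From mathcomp Require Import all_boot all_order all_algebra.
From mathcomp Require Import all_classical all_reals all_analysis.
From mathcomp Require Import Rstruct Rstruct_topology finmap.
From mathcomp Require Import ring lra zify.
Require Import Defs.
Set Implicit Arguments. Unset Strict Implicit. Unset Printing Implicit Defensive.
Import Order.TTheory GRing.Theory Num.Theory numFieldNormedType.Exports.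
Local Open Scope classical_set_scope.
Local Open Scope ring_scope.


Local Open Scope ring_scope.
Definition pt_of (Z : topologicalType) (z : Z) : Type := Z.
HB.instance Definition _ (Z : topologicalType) (z : Z) :=
  Topological.copy (@pt_of Z z) Z.
HB.instance Definition _ (Z : topologicalType) (z : Z) :=
  isPointed.Build (@pt_of Z z) z.

Section Gen.
Variable RR : realType.
Lemma sepf (Z : topologicalType) : completely_regular_space Z ->
  forall (a : Z) (B : set Z), closed B -> ~ B a ->
  exists f : Z -> RR, [/\ continuous f, (forall z, 0 <= f z <= 1), f a = 0 &
     (forall z, B z -> f z = 1)].
Proof.
move=> cr a B cB nBa; have := cr a B cB nBa.
move=> /(@uniform_separatorP Z RR) [f [cf rf f0 f1]].
exists f; split => //.
- by move=> z; have := rf (f z) (ex_intro2 _ _ z I erefl); rewrite /= in_itv.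
- by apply: f0; exists a.
- by move=> z Bz; apply: f1; exists z.
Qed.

Lemma fincov (Z : topologicalType) (K : set Z) (G : Z -> set Z) : compact K ->
  (forall z, K z -> open (G z)) -> (forall z, K z -> G z z) ->
  exists s : seq Z, (forall z, z \in s -> K z) /\
     (forall y, K y -> exists2 z, z \in s & G z y).
Proof.
move=> cK0 oG Gz.
have [[k Kk]|K0] := pselect (K !=set0); last first.
  exists [::]; split => // y Ky; exfalso; apply: K0; by exists y.
have cK : @cover_compact (pt_of k) K.
  by rewrite -compact_cover.
have [|D' sD' cov] := cK Z K G oG.
  by move=> y Ky; exists y => //; apply: Gz.
exists (enum_fset D'); split.
  by move=> z zD; have := sD' z zD; rewrite in_setE.
by move=> y /cov [z /= zD Gzy]; exists z.
Qed.

Lemma open_fin (Z : topologicalType) (s : seq Z) (P : Z -> set Z) :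
  (forall p, p \in s -> open (P p)) -> open [set b | forall p, p \in s -> P p b].
Proof.
elim: s => [|p s IH] H.
  rewrite (_ : [set b | _] = setT); first exact: openT.
  by apply/seteqP; split => b //= _ p; rewrite in_nil.
rewrite (_ : [set b | _] = P p `&` [set b | forall q, q \in s -> P q b]).
  apply: openI; first by apply: H; rewrite mem_head.
  by apply: IH => q qs; apply: H; rewrite in_cons qs orbT.
apply/seteqP; split => b /=.
  move=> Hb; split; first by apply: Hb; rewrite mem_head.
  by move=> q qs; apply: Hb; rewrite in_cons qs orbT.
by move=> [Pb Hb] q; rewrite in_cons => /orP [/eqP ->|]; [|apply: Hb].
Qed.

Lemma choose_cover (Z : Type) (K : set Z) (Acal : set (set Z)) :
  (forall z, K z -> exists A, Acal A /\ A z) ->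
  exists a : Z -> set Z, forall z, K z -> Acal (a z) /\ a z z.
Proof.
move=> H.
have H' : forall z, exists A, K z -> Acal A /\ A z.
  move=> z; have [Kz|nKz] := pselect (K z).
    by have [A HA] := H z Kz; exists A.
  by exists set0.
by have [a Ha] := choice H'; exists a.
Qed.

Lemma open_ball_pre (Z : topologicalType) (f : Z -> RR) (c r : RR) :
  continuous f -> open [set b | `|c - f b| < r].
Proof.
move=> cf; rewrite (_ : [set b | _] = f @^-1` ball c r).
  exact: (proj1 (continuousP f) cf _ (ball_open c r)).
by rewrite -ball_normE.
Qed.

Lemma star (Z : topologicalType) (K : set Z) : completely_regular_space Z ->
  compact K -> forall (Acal : set (set Z)), (forall A, Acal A -> open A) ->
  (forall z, K z -> exists A, Acal A /\ A z) ->
  exists Dcal : set (set Z), [/\ (forall D, Dcal D -> open D),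
     (forall z, K z -> exists D, Dcal D /\ D z) &
     (forall D, Dcal D -> exists A, Acal A /\
         forall D', Dcal D' -> D `&` D' !=set0 -> D' `<=` A)].
Proof.
move=> cr cK Acal oA covA.
have [a Ha] := choose_cover covA.
have Hpsi : forall z, exists f : Z -> RR, K z -> [/\ continuous f,
    (forall y, 0 <= f y <= 1), f z = 0 & (forall y, ~ a z y -> f y = 1)].
  move=> z; have [Kz|nKz] := pselect (K z); last by exists (fun _ => 0).
  have [Az azz] := Ha z Kz.
  have cl : closed (~` a z) by rewrite closedC; apply: oA.
  have [f Hf] := @sepf Z cr z (~` a z) cl (fun h => h azz).
  by exists f.
have [psi Hp] := choice Hpsi.
have [s [sK scov]] : exists s : seq Z, (forall z, z \in s -> K z) /\
     (forall y, K y -> exists2 z, z \in s & `|0 - psi z y| < 1/3).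
  apply: (@fincov Z K (fun z => [set y | `|0 - psi z y| < 1/3]) cK).
    by move=> z Kz; case: (Hp z Kz) => c _ _ _; apply: open_ball_pre.
  by move=> z Kz; case: (Hp z Kz) => _ _ pz _; rewrite /= pz subr0 normr0; lra.
pose bl (x : Z) (r : RR) := [set b | forall p, p \in s -> `|psi p x - psi p b| < r].
exists [set bl x (1/6) | x in K]; split.
- move=> _ [x Kx <-]; apply: open_fin => p ps.
  by case: (Hp p (sK p ps)) => cp _ _ _; apply: open_ball_pre.
- move=> z Kz; exists (bl z (1/6)); split; first by exists z.
  by move=> p _; rewrite subrr normr0.
- move=> _ [x Kx <-].
  have [p ps] := scov x Kx; rewrite /= sub0r normrN => px.
  have [cp rp p0 p1] := Hp p (sK p ps).
  exists (a p); split; first by case: (Ha p (sK p ps)).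
  move=> _ [x' Kx' <-] [q [qx qx']] y yx'.
  apply: contrapT => nay; have := p1 y nay.
  have := qx p ps; have := qx' p ps; have := yx' p ps; have := rp x.
  move: px; rewrite ger0_norm; last by case/andP: (rp x).
  move=> px /andP[h0 h1]; rewrite !ltr_norml => /andP[h2 h3] /andP[h4 h5] /andP[h6 h7].
  move=> h8; lra.
Qed.

Lemma choose_fun (T U : Type) (u0 : U) (P : T -> Prop) (Q : T -> U -> Prop) :
  (forall t, P t -> exists u, Q t u) -> exists f : T -> U, forall t, P t -> Q t (f t).
Proof.
move=> H.
have H' : forall t, exists u, P t -> Q t u.
  move=> t; have [Pt|nPt] := pselect (P t).
    by have [u Hu] := H t Pt; exists u.
  by exists u0.
by have [f Hf] := choice H'; exists f.
Qed.

Section Hier.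
Variables (X Y Z : topologicalType) (g : Y -> Z) (K : set Z).
Hypothesis cr : completely_regular_space Z.
Hypothesis cK : compact K.
Hypothesis AEh : forall (z : Z) (U : set Z), open U -> U z ->
     exists V : set Z, [/\ open V, V z, V `<=` U & AE X (g @^-1` V)].

Lemma hier (k : nat) : forall Acal : set (set Z), (forall A, Acal A -> open A) ->
  (forall z, K z -> exists A, Acal A /\ A z) ->
  exists (w0 : set (set Z)) (E : nat -> set Z -> set Z),
  [/\ finite_set w0, (forall B, w0 B -> open B),
      (forall z, K z -> exists B, w0 B /\ B z),
      (forall B, w0 B -> forall c, (c < k)%N -> AE X (g @^-1` (E c B))) /\
      (forall B B', w0 B -> w0 B' -> B `&` B' !=set0 -> forall c, (c.+1 < k)%N ->
          E c B' `<=` E c.+1 B) &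
      (forall B, w0 B -> forall c, (c < k)%N -> B `<=` E c B) /\
      (forall B, w0 B -> exists A, [/\ Acal A, B `<=` A &
          forall c, c.+1 = k -> E c B `<=` A])].
Proof.
elim: k => [|k IH] Acal oA covA.
  have [a Ha] := choose_cover covA.
  have [s [sK scov]] := @fincov Z K a cK
     (fun z Kz => oA _ (proj1 (Ha z Kz))) (fun z Kz => proj2 (Ha z Kz)).
  exists (a @` [set` s]), (fun _ _ => set0); split.
  - exact/finite_image/finite_seq.
  - by move=> _ [z zs <-]; apply: oA; case: (Ha z (sK z zs)).
  - by move=> y Ky; have [z zs azy] := scov y Ky; exists (a z); split => //; exists z.
  - by split.
  - split => //; move=> _ [z zs <-]; exists (a z); split => //.
    by case: (Ha z (sK z zs)).
pose Atop := fun V : set Z => [/\ open V, AE X (g @^-1` V) & exists A, Acal A /\ V `<=` A].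
have oAt : forall V, Atop V -> open V by move=> V [].
have covAt : forall z, K z -> exists V, Atop V /\ V z.
  move=> z Kz; have [A [AA Az]] := covA z Kz.
  have [V [oV Vz VA aeV]] := AEh (oA A AA) Az.
  by exists V; split => //; split => //; exists A.
have [Dcal [oD covD stD]] := star cr cK oAt covAt.
have [w0 [E [fin ow cov [hAE hch] [hsub htop]]]] := IH Dcal oD covD.
have [DB HDB] := choose_fun set0 htop.
have [T HT] := choose_fun set0 stD.
pose E' c B := if c == k then T (DB B) else E c B.
have BT : forall B, w0 B -> B `<=` T (DB B).
  move=> B wB y By; have [DD BD _] := HDB B wB.
  have [_ sT] := HT _ DD; apply: (sT (DB B) DD); first by exists y; split; apply: BD.
  exact: BD.
exists w0, E'; split => //; split.
- move=> B wB c; rewrite ltnS leq_eqVlt /E' => /orP[/eqP ->|ck].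
    by rewrite eqxx; have [DD _ _] := HDB B wB; have [[_ ? _] _] := HT _ DD.
  by rewrite ltn_eqF //; apply: hAE.
- move=> B B' wB wB' [z [zB zB']] c; rewrite ltnS => ck.
  rewrite /E' (ltn_eqF ck); case: eqP => [ck'|/eqP ck'].
    have [DD BD _] := HDB B wB; have [DD' BD' ED'] := HDB B' wB'.
    have [_ sT] := HT _ DD.
    move=> y /(ED' c ck') y'; apply: (sT _ DD') => //.
    by exists z; split; [apply: BD|apply: BD'].
  by apply: hch => //; [exists z | rewrite ltn_neqAle ck' ck].
- move=> B wB c; rewrite ltnS leq_eqVlt /E' => /orP[/eqP ->|ck].
    by rewrite eqxx; apply: BT.
  by rewrite ltn_eqF //; apply: hsub.
- move=> B wB; have [DD _ _] := HDB B wB; have [[_ _ [A [AA TA]]] _] := HT _ DD.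
  exists A; split => //; first by move=> y /(BT B wB) /TA.
  by move=> c [->]; rewrite /E' eqxx.
Qed.

End Hier.

Definition fmax (A Z : Type) (u : A -> Z -> RR) (t : seq A) (y : Z) : RR :=
  foldr (fun p acc => Num.max (u p y) acc) 0 t.

Lemma fmax_cont (A : eqType) (Z : topologicalType) (u : A -> Z -> RR) (t : seq A) :
  (forall p, p \in t -> continuous (u p)) -> continuous (fmax u t).
Proof.
elim: t => [|p t IH] H /=; first by move=> y; apply: cvg_cst.
move=> y; apply: (@continuous_max RR Z (u p) (fmax u t) y).
  by apply: H; rewrite mem_head.
by apply: IH => q qt; apply: H; rewrite in_cons qt orbT.
Qed.

Lemma fmax_ge0 (A Z : Type) (u : A -> Z -> RR) t y : 0 <= fmax u t y.
Proof. by elim: t => //= p t IH; rewrite le_max IH orbT. Qed.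

Lemma fmax_pos (A : eqType) (Z : Type) (u : A -> Z -> RR) t y :
  0 < fmax u t y -> exists2 p, p \in t & 0 < u p y.
Proof.
elim: t => [|p t IH] /=; first by rewrite ltxx.
rewrite lt_max => /orP[h|/IH [q qt hq]]; first by exists p => //; rewrite mem_head.
by exists q => //; rewrite in_cons qt orbT.
Qed.

Lemma fmax_ge (A : eqType) (Z : Type) (u : A -> Z -> RR) t y p :
  p \in t -> u p y <= fmax u t y.
Proof.
elim: t => [|q t IH] //=; rewrite in_cons => /orP[/eqP ->|pt].
  by rewrite le_max lexx.
by rewrite le_max IH ?orbT.
Qed.

Lemma closed_ge_fun (X : topologicalType) (u : X -> RR) (e : RR) :
  continuous u -> closed [set x | e <= u x].
Proof. by move=> cu; apply: (@preimage_closed _ _ u [set r | e <= r]) => [x _|]; [apply: cu|apply: closed_ge]. Qed.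

Lemma closed_le2 (X : topologicalType) (u v : X -> RR) (e : RR) :
  continuous u -> continuous v -> closed [set x | v x + e <= u x].
Proof.
move=> cu cv; rewrite (_ : [set x | _] = [set x | e <= (u - v) x]).
  apply: closed_ge_fun; move=> x; apply: continuousB; [exact: cu|exact: cv].
rewrite predeqE => x /=; rewrite !fctE lerBrDl addrC; by [].
Qed.

Lemma gap2 (a b e : RR) : 0 < e -> a + e <= b -> b + e <= a -> False.
Proof. move=> *; lra. Qed.

Lemma L1 (a e v : RR) : 0 <= a -> a + e < v -> e <= v.
Proof. move=> *; lra. Qed.
Lemma L2 (a e vi vj : RR) : a + e < vi -> vj <= a -> vj + e <= vi.
Proof. move=> *; lra. Qed.

Section Pieces.
Variables (X Z : topologicalType) (I : finType) (phi : I -> Z -> RR) (f : X -> Z).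
Variables (n : nat) (e : RR).
Hypothesis e0 : 0 < e.
Hypothesis ebound : (n.+2)%:R * e < 1/2.
Hypothesis cphi : forall i, continuous (phi i).
Hypothesis cf : continuous f.
Hypothesis phi0 : forall i y, 0 <= phi i y.
Hypothesis phibig : forall x, exists i, 1/2 < phi i (f x).
Hypothesis order : forall x (h : 'I_n.+2 -> I), injective h ->
   ~ (forall k, 0 < phi (h k) (f x)).

Definition Pc (S : {set I}) (x : X) : Prop :=
  [/\ (0 < #|S|)%N, (forall i, i \in S -> e <= phi i (f x)) &
      (forall i j, i \in S -> j \notin S -> phi j (f x) + e <= phi i (f x))].

Lemma Pc_closed S : closed (Pc S).
Proof.
have [S0|S0] := posnP #|S|.
  rewrite (_ : Pc _ = set0); first exact: closed0.
  by apply/seteqP; split => x //=; case; rewrite S0.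
rewrite (_ : Pc S = \bigcap_(i in [set: I]) ([set x | i \in S -> e <= phi i (f x)] `&`
    \bigcap_(j in [set: I]) [set x | i \in S -> j \notin S -> phi j (f x) + e <= phi i (f x)])).
  apply: closed_bigI => i _; apply: closedI.
    case: (boolP (i \in S)) => iS.
      rewrite (_ : [set x | _] = [set x | e <= (phi i \o f) x]).
        by apply: closed_ge_fun => x; apply: continuous_comp; [exact: cf|exact: cphi].
      by apply/seteqP; split => x /=; [apply|move=> h _].
    rewrite (_ : [set x | _] = setT); first exact: closedT.
    by apply/seteqP; split => x //= _; rewrite (negbTE iS).
  apply: closed_bigI => j _.
  case: (boolP (i \in S)) => iS; case: (boolP (j \in S)) => jS.
  - rewrite (_ : [set x | _] = setT); first exact: closedT.
    by apply/seteqP; split => x //= _ _; rewrite jS.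
  - rewrite (_ : [set x | _] = [set x | (phi j \o f) x + e <= (phi i \o f) x]).
      by apply: closed_le2 => x; apply: continuous_comp; [exact: cf|exact: cphi|exact: cf|exact: cphi].
    by apply/seteqP; split => x /=; [apply|move=> h _ _].
  - rewrite (_ : [set x | _] = setT); first exact: closedT.
    by apply/seteqP; split => x //= _; rewrite (negbTE iS).
  - rewrite (_ : [set x | _] = setT); first exact: closedT.
    by apply/seteqP; split => x //= _; rewrite (negbTE iS).
apply/seteqP; split => x.
  by case=> _ h1 h2 i _; split; [apply: h1|move=> j _; apply: h2].
move=> H; split => //.
  by move=> i iS; have [h1 _] := H i Logic.I; exact: h1.
by move=> i j iS jS; have [_ h2] := H i Logic.I; exact: h2.
Qed.

Lemma Pc_disj (S S' : {set I}) x : #|S| = #|S'| -> S != S' -> Pc S x -> Pc S' x -> False.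
Proof.
move=> eqc neq [_ _ h] [_ _ h'].
have [i iS iS'] : exists2 i, i \in S & i \notin S'.
  apply/subsetPn; apply: contraNN neq => sub.
  by rewrite eqEcard sub eqc leqnn.
have [j jS' jS] : exists2 j, j \in S' & j \notin S.
  apply/subsetPn; apply: contraNN neq => sub.
  by rewrite eq_sym eqEcard sub eqc leqnn.
have := h i j iS jS; have := h' j i jS' iS'; exact: gap2.
Qed.

Lemma Pc_cover x : exists S, Pc S x /\ (0 < #|S| <= n.+1)%N.
Proof.
have [i0 hi0] := phibig x.
have ke0 : forall k : nat, 0 <= k%:R * e by move=> k; rewrite mulr_ge0 // ltW.
have win : exists k : 'I_n.+2, forall i,
    ~ (k%:R * e < phi i (f x) <= k.+1%:R * e).
  apply: contrapT => H.
  have H' : forall k : 'I_n.+2, exists i, k%:R * e < phi i (f x) <= k.+1%:R * e.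
    move=> k; apply: contrapT => nk; apply: H; exists k => i hi; apply: nk.
    by exists i.
  have [h hh] := choice H'.
  apply: (@order x h).
    move=> k1 k2 eq; apply: val_inj; apply/eqP; rewrite eqn_leq.
    have := hh k1; have := hh k2; rewrite eq => /andP[a1 a2] /andP[b1 b2].
    apply/andP; split; rewrite -ltnS -(ltr_nat RR) -(ltr_pM2r e0).
      exact: lt_le_trans b1 a2.
    exact: lt_le_trans a1 b2.
  by move=> k; have /andP[h1 _] := hh k; apply: le_lt_trans h1.
case: win => k hk.
pose S : {set I} := [set i | k.+1%:R * e < phi i (f x)]%SET.
have Si : forall i, (i \in S) = (k.+1%:R * e < phi i (f x)) by move=> i; rewrite inE.
have kb : k.+1%:R * e <= n.+2%:R * e.
  by apply: ler_wpM2r; [exact: ltW|rewrite ler_nat; exact: ltn_ord].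
have kS : k.+1%:R * e = k%:R * e + e by rewrite -natr1 mulrDl mul1r.
have i0S : i0 \in S by rewrite Si; exact: (le_lt_trans kb (lt_trans ebound hi0)).
have pos : (0 < #|S|)%N by apply/card_gt0P; exists i0.
exists S; split; [split => //|].
- by move=> i; rewrite Si kS; apply: L1; apply: ke0.
- move=> i j; rewrite Si => hi; rewrite Si -leNgt => hj.
  have hk' : phi j (f x) <= k%:R * e.
    rewrite leNgt; apply/negP => hh; apply: (hk j); rewrite hh hj //.
  by move: hi; rewrite kS => hi; exact: L2 hi hk'.
rewrite pos /= leqNgt; apply/negP => big.
pose h (k' : 'I_n.+2) := @enum_val I (mem S) (widen_ord big k').
apply: (@order x h).
  move=> k1 k2 /enum_val_inj /(congr1 val) /= eq; exact: val_inj.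
move=> k'; have := @enum_valP I (mem S) (widen_ord big k').
by rewrite -/(h k') Si; apply: le_lt_trans; apply: ke0.
Qed.
End Pieces.

Section Build.
Variables (X Y Z : topologicalType) (g : Y -> Z) (f : X -> Z) (I : finType).
Variables (Pc : {set I} -> set X) (n : nat).
Variables (E : nat -> set Z -> set Z) (w0 : set (set Z)) (BS : {set I} -> set Z).
Variable d : X -> Y.
Hypothesis Pcl : forall S, closed (Pc S).
Hypothesis Pdisj : forall (S S' : {set I}) x, #|S| = #|S'| -> S != S' ->
  Pc S x -> Pc S' x -> False.
Hypothesis hBS : forall S : {set I}, (0 < #|S|)%N -> w0 (BS S) /\ forall x, Pc S x -> BS S (f x).
Hypothesis hAE : forall B, w0 B -> forall c, (c < n.+1)%N -> AE X (g @^-1` (E c B)).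
Hypothesis hchain : forall B B', w0 B -> w0 B' -> B `&` B' !=set0 ->
  forall c' c, (c' < c)%N -> (c < n.+1)%N -> E c' B' `<=` E c B.

Definition U (t : seq {set I}) := [set x | exists2 S, S \in t & Pc S x].

Lemma U_cons (S : {set I}) t : U (S :: t) = Pc S `|` U t.
Proof.
apply/seteqP; split => x.
  by case=> S'; rewrite in_cons => /orP[/eqP ->|S't] h; [left|right; exists S'].
by case=> [h|[S' S't h]]; [exists S; rewrite ?mem_head|exists S'; rewrite ?in_cons ?S't ?orbT].
Qed.

Lemma U_closed t : closed (U t).
Proof.
elim: t => [|S t IH].
  rewrite (_ : U [::] = set0); first exact: closed0.
  by apply/seteqP; split => x // [S].
by rewrite U_cons; apply: closedU.
Qed.

Lemma build t : uniq t -> pairwise (fun S S' : {set I} => #|S'| <= #|S|)%N t ->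
  all (fun S : {set I} => 0 < #|S| <= n.+1)%N t ->
  exists F : X -> Y, {within U t, continuous F} /\
    forall x, U t x -> exists S, [/\ S \in t, Pc S x & E (#|S|.-1) (BS S) (g (F x))].
Proof.
elim: t => [|S t IH].
  move=> _ _ _; exists d; split; last by move=> x [S].
  by rewrite continuous_subspace_in => x; rewrite in_setE => -[S].
rewrite pairwise_cons /= => /andP[St ut] /andP[allS pt] /andP[/andP[S0 Sn] allt].
have [F [cF inv]] := IH ut pt allt.
have [wB BSx] := hBS S0.
pose c := #|S|.-1.
have cn : (c < n.+1)%N by rewrite /c; lia.
pose A := U t `&` Pc S.
have hA : F @` A `<=` g @^-1` (E c (BS S)).
  move=> _ [x [Ux PSx] <-] /=.
  have [S' [S't PS'x ES']] := inv x Ux.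
  have le : (#|S'| <= #|S|)%N by move/allP: allS => /(_ S' S't).
  have ne : S != S' by apply: contraNneq St => ->.
  have S'0 : (0 < #|S'|)%N by move/allP: allt => /(_ S' S't) /andP[].
  have lt : (#|S'| < #|S|)%N.
    rewrite ltn_neqAle le andbT; apply/eqP => eq.
    exact: (Pdisj (esym eq) ne PSx PS'x).
  have [wB' BS'x] := hBS S'0.
  apply: (hchain wB wB' _ (c' := #|S'|.-1)) => //.
    by exists (f x); split; [apply: BSx|apply: BS'x].
  by rewrite /c; lia.
have clA : closed A by apply: closedI; [apply: U_closed|apply: Pcl].
have cFA : {within A, continuous F}.
  by apply: continuous_subspaceW cF => x [].
have [G [cG GE GA]] := hAE wB cn clA cFA hA.
pose F' x := if pselect (U t x) is left _ then F x else G x.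
exists F'; split.
  rewrite U_cons; apply: withinU_continuous; [apply: Pcl|apply: U_closed| |].
    apply: (subspace_eq_continuous (f := G)) => [x|].
      rewrite in_setE => Px; change (G x = F' x); rewrite /F'.
      by case: (pselect (U t x)) => // Ux; rewrite GA.
    exact: continuous_subspaceT.
  apply: (subspace_eq_continuous (f := F)) => [x|//].
  by rewrite in_setE => Ux; change (F x = F' x); rewrite /F'; case: (pselect (U t x)).
move=> x; rewrite U_cons /F' => Ux'; case: (pselect (U t x)) => [Ux|nUx].
  have [S' [S't PS'x ES']] := inv x Ux.
  by exists S'; split => //; rewrite in_cons S't orbT.
case: Ux' => // Px.
by exists S; split => //; [rewrite mem_head|apply: GE].
Qed.
End Build.

Lemma chain_gen (Z : Type) (w0 : set (set Z)) (E : nat -> set Z -> set Z) (k : nat) :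
  (forall B B', w0 B -> w0 B' -> B `&` B' !=set0 -> forall c, (c.+1 < k)%N ->
          E c B' `<=` E c.+1 B) ->
  forall B B', w0 B -> w0 B' -> B `&` B' !=set0 ->
  forall c' c, (c' < c)%N -> (c < k)%N -> E c' B' `<=` E c B.
Proof.
move=> hch B B' wB wB' [z [zB zB']] c'; elim => // c IH.
rewrite ltnS leq_eqVlt => /orP[/eqP <-|lt] ck.
  by apply: hch => //; exists z.
move=> y /(IH lt (ltnW ck)); apply: hch => //; first by exists z.
Qed.

Lemma ebound_lem (n : nat) : (n.+2%:R : RR) * ((n.+3%:R)^-1 / 2) < 1 / 2.
Proof.
rewrite mulrA mul1r -[X in _ < X]mul1r ltr_pM2r ?invr_gt0 ?ltr0n //.
by rewrite ltr_pdivrMr ?ltr0n // mul1r ltr_nat.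
Qed.

Lemma e_pos (n : nat) : (0 : RR) < (n.+3%:R)^-1 / 2.
Proof. by rewrite divr_gt0 // ?invr_gt0 ?ltr0n. Qed.

Lemma main_gen (X Y Z : topologicalType) (g : Y -> Z) :
  compact [set: X] -> completely_regular_space Z ->
  (forall K : set Z, compact K -> exists n : nat, covering_dim_le K n) ->
  (forall z : Z, exists y : Y, g y = z) ->
  (forall (z : Z) (U : set Z), open U -> U z ->
     exists V : set Z, [/\ open V, V z, V `<=` U & AE X (g @^-1` V)]) ->
  forall w : set (set Z), open_cover w ->
  forall f : X -> Z, continuous f ->
  exists ft : X -> Y, continuous ft /\
    (forall x : X, exists W, [/\ w W, W (f x) & W (g (ft x))]).
Proof.
move=> cX crZ dimh surj AEh w [ow cw] f cf.
have [[x0 _]|nX] := pselect (exists x : X, True); last first.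
  exists (fun x => False_rect _ (nX (ex_intro _ x Logic.I))); split.
    by move=> x; exfalso; apply: nX; exists x.
  by move=> x; exfalso; apply: nX; exists x.
have [y0 _] := surj (f x0).
pose K := f @` [set: X].
have fK : forall x, K (f x) by move=> x; exists x.
have cK : compact K by apply: continuous_compact => //; apply: continuous_subspaceT.
have [n dimK] := dimh K cK.
have [w0 [E [fin ow0 cov0 [hAE hch] [hsub htop]]]] :=
  @hier X Y Z g K crZ cK AEh n.+1 w ow (fun z _ => cw z).
have hchain := chain_gen hch.
pose wK := [set B `&` K | B in w0].
have [v [vfin vrel vcov vref vord]] := dimK wK (finite_image _ fin)
  (ltac:(by move=> _ [B wB <-]; exists B; split => //; apply: ow0))
  (ltac:(move=> z Kz; have [B [wB Bz]] := cov0 z Kz; exists (B `&` K) => //;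
           by exists B)).
have [Fv vE] := (finite_fsetP).1 vfin.
have vV : forall i : Fv, v (val i) by move=> i; rewrite vE; exact: fsvalP.
have [Op HO] : exists Op : Fv -> set Z, forall i, open (Op i) /\ val i = Op i `&` K.
  have H : forall i : Fv, exists Op, open Op /\ val i = Op `&` K.
    by move=> i; have [Op [oO eO]] := vrel _ (vV i); exists Op.
  by have [Op HO] := choice H; exists Op.
have [Bi HBi] : exists Bi : Fv -> set Z, forall i, w0 (Bi i) /\ val i `<=` Bi i.
  have H : forall i : Fv, exists B, w0 B /\ val i `<=` B.
    move=> i; have [_ [[B wB <-] sub]] := vref _ (vV i).
    by exists B; split => // y /sub [].
  by have [Bi HBi] := choice H; exists Bi.
have [i0 _] : exists i : Fv, True.
  have [V0 vV0 V0x] := vcov (f x0) (fK x0).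
  have : V0 \in Fv by move: vV0; rewrite vE.
  by move=> h; exists [` h]%fset.
have Hip0 : forall z, K z -> exists i : Fv, val i z.
  move=> z Kz; have [V0 vV0 V0z] := vcov z Kz.
  have h : V0 \in Fv by move: vV0; rewrite vE.
  by exists [` h]%fset.
have [ip Hip] := choose_fun i0 Hip0.
have HipO : forall z, K z -> Op (ip z) z.
  by move=> z Kz; have := Hip z Kz; rewrite (proj2 (HO (ip z))) => -[].
have Hpsi0 : forall z, K z -> exists p : Z -> RR,
    [/\ continuous p, (forall y, 0 <= p y <= 1), p z = 0 &
        (forall y, ~ Op (ip z) y -> p y = 1)].
  move=> z Kz.
  have cl : closed (~` Op (ip z)) by rewrite closedC; exact: (proj1 (HO _)).
  have [p Hp] := @sepf Z crZ z (~` Op (ip z)) cl (fun h => h (HipO z Kz)).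
  by exists p.
have [psi Hpsi] := choose_fun (fun _ => 0) Hpsi0.
have [s [sK scov]] : exists s : seq Z, (forall z, z \in s -> K z) /\
     (forall y, K y -> exists2 z, z \in s & `|0 - psi z y| < 1/2).
  apply: (@fincov Z K (fun z => [set y | `|0 - psi z y| < 1/2]) cK).
    by move=> z Kz; case: (Hpsi z Kz) => c _ _ _; apply: open_ball_pre.
  by move=> z Kz; case: (Hpsi z Kz) => _ _ pz _; rewrite /= pz subr0 normr0.
pose u (i : Fv) (p : Z) (y : Z) : RR := if ip p == i then 1 - psi p y else 0.
pose phi (i : Fv) := fmax (u i) s.
have cphi : forall i, continuous (phi i).
  move=> i; apply: fmax_cont => p ps; rewrite /u; case: (ip p == i) => y.
    apply: continuousB; first exact: cvg_cst.
    by case: (Hpsi p (sK p ps)) => cp _ _ _; exact: cp.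
  exact: cvg_cst.
have phi0 : forall i y, 0 <= phi i y by move=> i y; apply: fmax_ge0.
have phiO : forall i y, 0 < phi i y -> Op i y.
  move=> i y hy; have [p ps] := fmax_pos hy; rewrite /u.
  case: eqP => [<-|]; last by rewrite ltxx.
  move=> h; apply: contrapT => nO; have [_ _ _ h1] := Hpsi p (sK p ps).
  by move: h; rewrite h1 // subrr ltxx.
have phibig : forall x, exists i, 1/2 < phi i (f x).
  move=> x; have [p ps hp] := scov (f x) (fK x).
  exists (ip p); apply: (lt_le_trans _ (fmax_ge _ _ ps)).
  rewrite /u eqxx; have [_ rp _ _] := Hpsi p (sK p ps).
  move: hp; rewrite sub0r normrN ger0_norm; last by case/andP: (rp (f x)).
  move=> hp; lra.
have order : forall x (h : 'I_n.+2 -> Fv), injective h ->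
    ~ (forall k, 0 < phi (h k) (f x)).
  move=> x h hinj hpos; apply: (vord (fun k => val (h k))).
  - by move=> k1 k2 /val_inj /hinj.
  - by move=> k; apply: vV.
  - exists (f x); split; first exact: fK.
    by move=> k; rewrite (proj2 (HO (h k))); split; [apply: phiO|apply: fK].
pose e : RR := (n.+3%:R)^-1 / 2.
have e0 : 0 < e by apply: e_pos.
have eb : n.+2%:R * e < 1 / 2 by apply: ebound_lem.
pose BS (S : {set Fv}) := if [pick i in S] is Some i then Bi i else set0.
have hBS : forall S : {set Fv}, (0 < #|S|)%N -> w0 (BS S) /\
    forall x, Pc phi f e S x -> BS S (f x).
  move=> S S0; rewrite /BS; case: pickP => [i iS|none]; last first.
    by move: S0; rewrite lt0n cards_eq0 => /set0Pn [i]; rewrite none.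
  split; first exact: (proj1 (HBi i)).
  move=> x [_ h1 _]; apply: (proj2 (HBi i)).
  rewrite (proj2 (HO i)); split; last exact: fK.
  by apply: phiO; apply: lt_le_trans (h1 i iS).
pose allS : seq {set Fv} := enum {: {set Fv}}.
pose bnd := fun S : {set Fv} => (0 < #|S| <= n.+1)%N.
pose leS := fun S S' : {set Fv} => (#|S'| <= #|S|)%N.
pose r := sort leS (seq.filter bnd allS).
have [F [cF inv]] := @build X Y Z g f Fv (Pc phi f e) n E w0 BS (fun _ => y0)
  (@Pc_closed X Z Fv phi f e cphi cf) (@Pc_disj X Z Fv phi f e e0) hBS hAE hchain r
  (ltac:(by rewrite sort_uniq filter_uniq // enum_uniq))
  (ltac:(rewrite -sorted_pairwise; first apply: sort_sorted;
           [by move=> S S'; apply: leq_total|by move=> S1 S2 S3 h1 h2; apply: leq_trans h2 h1]))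
  (ltac:(by apply/allP => S; rewrite mem_sort mem_filter => /andP[])).
have Ur : U (Pc phi f e) r = setT.
  apply/seteqP; split => x // _.
  have [S [PS Sb]] := Pc_cover e0 eb phibig order x.
  by exists S => //; rewrite mem_sort mem_filter /bnd Sb mem_enum.
exists F; split.
  by apply/continuous_subspace_setT; rewrite -Ur.
move=> x; have [S [Sr PSx ES]] := inv x (ltac:(by rewrite Ur)).
have /andP[S0 Sn] : (0 < #|S| <= n.+1)%N.
  by move: Sr; rewrite mem_sort mem_filter => /andP[].
have [wB BSx] := hBS S S0.
have [A [wA BA EA]] := htop _ wB.
exists A; split => //; first exact: (BA _ (BSx x PSx)).
apply: (EA n erefl).
have : (#|S|.-1 <= n)%N by lia.
rewrite leq_eqVlt => /orP[/eqP <-//|lt].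
apply: (hchain _ _ wB wB _ _ _ lt (ltnSn n)) => //.
by exists (f x); split; apply: BSx.
Qed.
End Gen.

Theorem lemma3p3 (X Y Z : topologicalType) (g : Y -> Z) :
  compactum_sp X -> tychonoff_sp X -> tychonoff_sp Y -> tychonoff_sp Z ->
  paracompact Z ->
  (forall K : set Z, compact K -> exists n : nat, covering_dim_le K n) ->
  continuous g -> (forall z : Z, exists y : Y, g y = z) ->
  (forall (z : Z) (U : set Z), open U -> U z ->
     exists V : set Z, [/\ open V, V z, V `<=` U & AE X (g @^-1` V)]) ->
  forall w : set (set Z), open_cover w ->
  forall f : X -> Z, continuous f ->
  exists ft : X -> Y, continuous ft /\
    (forall x : X, exists W, [/\ w W, W (f x) & W (g (ft x))]).
Proof.
move=> [cX _] _ _ [crZ _] _ dimh _ surj AEh w ow f cf.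
exact: (@main_gen Rdefinitions.R X Y Z g cX crZ dimh surj AEh w ow f cf).
Qed.
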